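(* Let $\lambda:\frac12\mathbb{N}\to\mathbb{C}$ and let $\sigma\in\Phi^0(SU_q(2))$ satisfy $\sum_{j=-l}^{l}\sigma_{i_0j}(l)=\lambda(l)$ for every $l\in\frac12\mathbb{N}$ and every $-l\le i_0\le l$. Then $\{\lambda(l)\}_{l\in\frac12\mathbb{N}}\subseteq\mathrm{spec}(T_\sigma)$, and the multiplicity of $\lambda(l)$ as an eigenvalue is at least $2l+1$.
   Context: Fix $0<q<1$. $SU_q(2)$ is the $*$-algebra generated by $a,c$ with $ac^*=qc^*a$, $ca^*=qa^*c$, $c^*a^*=qa^*c^*$, $c^*c=cc^*$, $aa^*+q^2c^*c=a^*a+c^*c=1$, with Haar state $h$. For $l\in\frac12\mathbb{N}$, $T^l=[t^l_{ij}]_{-l\le i,j\le l}$ is the irreducible unitary matrix corepresentation of dimension $2l+1$; $\{t^l_{ij}\}$ is an orthogonal basis with $h(t^l_{ij}(t^l_{ij})^* )=[2l+1]_q^{-1}q^{2j}$, $[x]_q=\frac{q^x-q^{-x}}{q-q^{-1}}$. Fourier transform: $\hat f(l)_{mn}=h(f(t^l_{nm})^* )$. $Tr_q(M)=Tr(D_qM)$, $D_q=\mathrm{diag}(q^{-2i})_{-l\le i\le l}$. A symbol is a map $\sigma:\frac12\mathbb{N}\to\bigcup_lM_{2l+1}(\mathbb{C})\otimes SU_q(2)$ (matrix entries $\sigma_{ij}(l)$, $-l\le i,j\le l$), with operator $T_\sigma f=\sum_l[2l+1]_qTr_q(\sigma(l)\hat f(l)T^l)$. With $I_{2l+1}=\{-l,\dots,l\}$: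 $\sigma$ is homogeneous of Fourier order $m\in\frac12\mathbb{N}$ if for each $l$ there is $\psi_\sigma(l):I_{2l+1}^2\to I_{2l+1}^2$ with $\sigma(l)_{ij}\in\mathrm{Span}\{t^m_{\psi_\sigma(l)(i,j)}\}$ and $\sigma(l)_{ij}=0$ when $\psi_\sigma(l)(i,j)\notin I_{2m+1}^2$; $\Phi^m(SU_q(2))$ consists of finite linear combinations of such symbols; in particular symbols in $\Phi^0$ have complex entries. *)

(* Defs.v *)
From HB Require Import structures.
From mathcomp Require Import all_boot all_order all_algebra.
Set Implicit Arguments. Unset Strict Implicit. Unset Printing Implicit Defensive.
Import Order.TTheory GRing.Theory Num.Theory.
Local Open Scope ring_scope.

Section SUq2.
Variables (C : numClosedFieldType) (q : C).

(* Conventions: l in 1/2 N is encoded by n = 2l : nat; an index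
   -l <= i <= l is encoded by k : 'I_n.+1 with i = k - n/2, so 2i = 2k - n. *)

Definition qint (m : nat) : C := (q ^+ m - q ^- m) / (q - q^-1).

Definition twice_idx (n : nat) (k : 'I_n.+1) : int := Posz (2 * k)%N - Posz n.

Definition lin_fun (V : lmodType C) (phi : V -> C) :=
  forall k x y, phi (k *: x + y) = k * phi x + phi y.

Definition lin_map (V W : lmodType C) (f : V -> W) :=
  forall k x y, f (k *: x + y) = k *: f x + f y.

Inductive generated (A : algType C) (star : A -> A) (a c : A) : A -> Prop :=
| gen_a : generated star a c a
| gen_c : generated star a c c
| gen_as : generated star a c (star a)
| gen_cs : generated star a c (star c)
| gen_1 : generated star a c 1
| gen_add x y : generated star a c x -> generated star a c y -> generated star a c (x + y)
| gen_scale k x : generated star a c x -> generated star a c (k *: x)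
| gen_mul x y : generated star a c x -> generated star a c y -> generated star a c (x * y).

(* A model of SU_q(2): the *-algebra A generated by a, c with the defining
   relations, its Haar state h, the matrix coefficients t^l_{ij} of the
   irreducible unitary corepresentations T^l, and the comultiplication
   (into an algebra B playing the role of A (x) A, with slice maps). *)
Record SUq2_model (A : algType C) : Type := SUq2Model {
  star : A -> A;
  ga : A;
  gc : A;
  haar : A -> C;
  tc : forall n : nat, 'I_n.+1 -> 'I_n.+1 -> A;
  B : algType C;
  tens : A -> A -> B;
  coprod : A -> B;
  slL : (A -> C) -> B -> A;
  slR : (A -> C) -> B -> A;
  star_add : forall x y, star (x + y) = star x + star y;
  star_scale : forall k x, star (k *: x) = k^* *: star x;
  star_mul : forall x y, star (x * y) = star y * star x;
  star_invol : forall x, star (star x) = x;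
  rel1 : ga * star gc = q *: (star gc * ga);
  rel2 : gc * star ga = q *: (star ga * gc);
  rel3 : star gc * star ga = q *: (star ga * star gc);
  rel4 : star gc * gc = gc * star gc;
  rel5 : ga * star ga + q ^+ 2 *: (star gc * gc) = 1;
  rel6 : star ga * ga + star gc * gc = 1;
  generated_all : forall x, generated star ga gc x;
  haar_lin : lin_fun haar;
  haar_1 : haar 1 = 1;
  haar_pos : forall x, 0 <= haar (star x * x);
  tens_linl : forall y, lin_map (fun x => tens x y);
  tens_linr : forall x, lin_map (tens x);
  tens_mul : forall x y x' y', tens (x * x') (y * y') = tens x y * tens x' y';
  tens_1 : tens 1 1 = 1;
  slL_spec : forall phi, lin_fun phi ->
     lin_map (slL phi) /\ forall x y, slL phi (tens x y) = phi x *: y;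
  slR_spec : forall phi, lin_fun phi ->
     lin_map (slR phi) /\ forall x y, slR phi (tens x y) = phi y *: x;
  coprod_lin : lin_map coprod;
  coprod_mul : forall x y, coprod (x * y) = coprod x * coprod y;
  coprod_1 : coprod 1 = 1;
  haar_invL : forall x, slL haar (coprod x) = haar x *: 1;
  haar_invR : forall x, slR haar (coprod x) = haar x *: 1;
  t_corep : forall n (i j : 'I_n.+1),
     coprod (tc i j) = \sum_(k < n.+1) tens (tc i k) (tc k j);
  t_unitary1 : forall n (i j : 'I_n.+1),
     \sum_(k < n.+1) tc i k * star (tc j k) = (i == j)%:R;
  t_unitary2 : forall n (i j : 'I_n.+1),
     \sum_(k < n.+1) star (tc k i) * tc k j = (i == j)%:R;
  t_zero : tc (n := 0) ord0 ord0 = 1;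
  t_half : [/\ tc (n := 1) ord0 ord0 = ga, tc (n := 1) ord0 ord_max = - (q *: star gc),
               tc (n := 1) ord_max ord0 = gc & tc (n := 1) ord_max ord_max = star ga];
  t_span : forall f, exists N (co : forall n : nat, 'I_n.+1 -> 'I_n.+1 -> C),
     f = \sum_(n < N) \sum_(i < n.+1) \sum_(j < n.+1) co n i j *: tc i j;
  t_orth : forall n n' (i j : 'I_n.+1) (i' j' : 'I_n'.+1),
     haar (tc i j * star (tc i' j')) =
       if [&& n == n', val i == val i' & val j == val j']
       then (qint n.+1)^-1 * q ^ twice_idx j else 0
}.

Variables (A : algType C) (M : SUq2_model A).

Definition fhat (f : A) (n : nat) : 'M[C]_n.+1 :=
  \matrix_(r, s) haar M (f * star M (tc M s r)).

(* [2l+1]_q Tr_q(S T^l) for a complex matrix S, where Tr_q(X) = Tr(D_q X),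
   D_q = diag(q^{-2i}) *)
Definition qtrace_T (n : nat) (S : 'M[C]_n.+1) : A :=
  qint n.+1 *: \sum_(i < n.+1) q ^ (- twice_idx i) *:
                 \sum_(k < n.+1) S i k *: tc M k i.

Definition symbol0 := forall n : nat, 'M[C]_n.+1.

(* g = T_sigma f, where T_sigma f = sum_l [2l+1]_q Tr_q(sigma(l) hat f(l) T^l);
   the sum has finitely many nonzero terms. *)
Definition Tsigma_is (sigma : symbol0) (f g : A) : Prop :=
  exists N : nat, (forall m, (N <= m)%N -> fhat f m = 0) /\
    g = \sum_(m < N) qtrace_T (sigma m *m fhat f m).

Definition is_eigenvalue (sigma : symbol0) (lam : C) : Prop :=
  exists f : A, f != 0 /\ Tsigma_is sigma f (lam *: f).

Definition lin_indep (m : nat) (v : 'I_m -> A) : Prop :=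
  forall co : 'I_m -> C, \sum_(k < m) co k *: v k = 0 -> forall k, co k = 0.

End SUq2.

(* Main.v *)
Require Import Defs.
From HB Require Import structures.
From mathcomp Require Import all_boot all_order all_algebra.
From mathcomp Require Import ring.
Import Order.TTheory GRing.Theory Num.Theory.
Local Open Scope ring_scope.

Section Helpers.
Set Implicit Arguments.
Variable (C : numClosedFieldType).

Lemma lin0 (V : lmodType C) (phi : V -> C) : lin_fun phi -> phi 0 = 0.
Proof.
move=> h; have := h 1 0 0; rewrite scale1r addr0 mul1r.
by move/(congr1 (fun x => x - phi 0)); rewrite addrK subrr.
Qed.

Lemma linD (V : lmodType C) (phi : V -> C) : lin_fun phi ->
  forall x y, phi (x + y) = phi x + phi y.
Proof. by move=> h x y; have := h 1 x y; rewrite scale1r mul1r. Qed.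

Lemma linZ (V : lmodType C) (phi : V -> C) : lin_fun phi ->
  forall k x, phi (k *: x) = k * phi x.
Proof. by move=> h k x; have := h k x 0; rewrite addr0 (lin0 h) addr0. Qed.

Lemma linS (V : lmodType C) (phi : V -> C) : lin_fun phi ->
  forall m (F : 'I_m -> V), phi (\sum_(i < m) F i) = \sum_(i < m) phi (F i).
Proof.
move=> h m F; elim/big_rec2: _; first exact: lin0.
by move=> i y1 y2 _ <-; rewrite linD.
Qed.

Lemma qint_neq0 (q : C) : 0 < q < 1 -> forall m, (0 < m)%N -> qint q m != 0.
Proof.
move=> /andP[q0 q1].
have key : forall m, (0 < m)%N -> q ^+ m - q ^- m != 0.
  move=> m m0; rewrite subr_eq0 lt_eqF //.
  have h1 : q ^+ m < 1 by rewrite exprn_ilt1 ?ltW // -lt0n.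
  apply: (lt_trans h1); rewrite invf_gt1 //; exact: exprn_gt0.
move=> m m0; rewrite /qint mulf_neq0 ?invr_eq0 ?key //.
by have := key 1%N isT; rewrite expr1.
Qed.

End Helpers.

Section Main.
Set Implicit Arguments.
Variables (C : numClosedFieldType) (q : C) (hq : 0 < q < 1)
    (A : algType C) (M : SUq2_model q A).

Let q0 : q != 0.
Proof. by case/andP: hq => h _; rewrite gt_eqF. Qed.

Definition wv (n : nat) (b : 'I_n.+1) : C := q ^ (- twice_idx b).

Definition vv (n : nat) (a : 'I_n.+1) : A := \sum_(b < n.+1) wv b *: tc M a b.

Lemma wv_d n (b : 'I_n.+1) : wv b * q ^ twice_idx b = 1.
Proof. by rewrite /wv -expfzDr // addNr expr0z. Qed.

Lemma hmul_lin (g : A) : lin_fun (fun x : A => haar M (x * g)).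
Proof. by move=> k x y; rewrite mulrDl -scalerAl (haar_lin M). Qed.

Lemma haar_v n (a : 'I_n.+1) m (s r : 'I_m.+1) :
  haar M (vv a * star M (tc M s r)) =
  if (n == m) && (val a == val s) then (qint q n.+1)^-1 else 0.
Proof.
rewrite /vv (linS (hmul_lin _)).
under eq_bigr => b _ do rewrite -scalerAl (linZ (haar_lin M)) (t_orth M).
case: (eqVneq n m) => [enm|nnm] /=; last by rewrite big1 // => b _; rewrite mulr0.
subst m; case: (eqVneq (val a) (val s)) => [eas|nas] /=; last first.
  by rewrite big1 // => b _; rewrite mulr0.
rewrite (bigD1 r) //= eqxx mulrCA wv_d mulr1 big1 ?addr0 // => b /negbTE brn.
by rewrite val_eqE brn mulr0.
Qed.


Lemma fhat_v_ne n (a : 'I_n.+1) m : m != n -> fhat M (vv a) m = 0.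
Proof.
move=> hmn; apply/matrixP => r s; rewrite !mxE haar_v.
by rewrite eq_sym (negbTE hmn).
Qed.

Lemma fhat_v_eq n (a : 'I_n.+1) :
  fhat M (vv a) n = \matrix_(r, s) ((s == a)%:R * (qint q n.+1)^-1).
Proof.
apply/matrixP => r s; rewrite !mxE haar_v eqxx /= val_eqE eq_sym.
by case: (s == a); rewrite ?mul1r ?mul0r.
Qed.

Lemma T_v (sigma : symbol0 C) lam
    (hrow : forall (n : nat) (i0 : 'I_n.+1), \sum_(j < n.+1) sigma n i0 j = lam n)
    n (a : 'I_n.+1) :
  Tsigma_is M sigma (vv a) (lam n *: vv a).
Proof.
exists n.+1; split.
  by move=> m hm; apply: fhat_v_ne; rewrite neq_ltn hm orbT.
rewrite big_ord_recr /= big1 ?add0r; last first.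
  move=> m _; rewrite fhat_v_ne ?neq_ltn ?ltn_ord // mulmx0 /qtrace_T.
  rewrite big1 ?scaler0 // => i _; rewrite big1 ?scaler0 // => k _.
  by rewrite mxE scale0r.
rewrite fhat_v_eq /qtrace_T /vv !scaler_sumr; apply: eq_bigr => i _.
rewrite (bigD1 a) //= big1 ?addr0; last first.
  move=> k /negbTE ka; rewrite mxE big1 ?scale0r // => r _.
  by rewrite mxE ka mul0r mulr0.
rewrite mxE.
under eq_bigr => r _ do rewrite mxE eqxx mul1r.
rewrite -big_distrl /= hrow !scalerA; congr (_ *: _).
have := @qint_neq0 _ q hq _ (ltn0Sn n); rewrite /wv => hz.
by field.
Qed.


Lemma vv_indep n : lin_indep (@vv n).
Proof.
move=> co hs k.
have := congr1 (fun x => haar M (x * star M (tc M k k))) hs.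
rewrite /= (lin0 (hmul_lin _)) (linS (hmul_lin _)).
under eq_bigr => a _ do rewrite (linZ (hmul_lin _)) /= haar_v eqxx /= val_eqE.
rewrite (bigD1 k) //= eqxx big1 ?addr0; last by move=> a /negbTE ->; rewrite mulr0.
move/eqP; rewrite mulf_eq0 invr_eq0 (negbTE (@qint_neq0 _ q hq _ (ltn0Sn n))) orbF.
by move/eqP.
Qed.

End Main.

Theorem mainTheorem9 (C : numClosedFieldType) (q : C) (hq : 0 < q < 1)
    (A : algType C) (M : SUq2_model q A) (lam : nat -> C) (sigma : symbol0 C)
    (hrow : forall (n : nat) (i0 : 'I_n.+1), \sum_(j < n.+1) sigma n i0 j = lam n) :
  forall n : nat,
    is_eigenvalue M sigma (lam n) /\
    exists v : 'I_n.+1 -> A,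
      lin_indep v /\ forall k, Tsigma_is M sigma (v k) (lam n *: v k).
Proof.
move=> n; split; last first.
  exists (@vv _ q _ M n); split; first exact: vv_indep.
  by move=> k; apply: T_v.
exists (@vv _ q _ M n ord0); split; last by apply: T_v.
apply/eqP => h0.
have hz : \sum_(a < n.+1) (a == ord0)%:R *: @vv _ q _ M n a = 0.
  rewrite (bigD1 ord0) //= ?eqxx scale1r h0 add0r big1 // => a /negbTE ->.
  by rewrite scale0r.
have := @vv_indep _ q hq _ M n (fun a => (a == ord0)%:R) hz ord0.
move=> /= /eqP; rewrite ?eqxx oner_eq0 //.
Qed.
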